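(* The set $\{S_1 : S\in\mathrm{OW}_n(\mathbb{C})\}$ of first slices of symmetric tensors in $\mathrm{OW}_n(\mathbb{C})$ is dense (in the Euclidean topology) in the space of complex symmetric $n\times n$ matrices.
   Context: For a symmetric tensor $S\in\mathbb{C}^{n\times n\times n}$ the first slice is $S_1=(S_{ij1})_{1\le i,j\le n}$. Tensors are identified with cubic forms $f=\sum_{i,j,k}S_{ijk}x_ix_jx_k$. $\mathrm{OW}_n(\mathbb{C})$ is the set of $f\in\mathbb{C}[x_1,\dots,x_n]_3$ that can be written $f(x)=g(Ax)$ with $A\in M_n(\mathbb{C})$, $A^TA=\mathrm{Id}$, and $g=\alpha_1x_1^3+\cdots+\alpha_nx_n^3$. *)

(* Defs.v *)
From HB Require Import structures.
From mathcomp Require Import all_boot all_order all_algebra.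
Set Implicit Arguments. Unset Strict Implicit. Unset Printing Implicit Defensive.
Import Order.TTheory GRing.Theory Num.Theory.
Local Open Scope ring_scope.

Definition tensor3 (C : Type) (n : nat) := 'I_n -> 'I_n -> 'I_n -> C.

(* Full symmetry under permutations of the three indices
   (generated by the two adjacent transpositions). *)
Definition sym_tensor (C : Type) (n : nat) (S : tensor3 C n) : Prop :=
  forall i j k, S i j k = S j i k /\ S i j k = S i k j.

Definition cubic_form (C : ringType) (n : nat) (S : tensor3 C n) (x : 'cV[C]_n) : C :=
  \sum_(i < n) \sum_(j < n) \sum_(k < n) S i j k * x i 0 * x j 0 * x k 0.

(* OW_n(C): symmetric tensors whose cubic form is f(x) = g(A x) with
   A^T A = Id and g = alpha_1 x_1^3 + ... + alpha_n x_n^3 (identity of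
   polynomials, stated as identity of functions on C^n; C is infinite). *)
Definition in_OW (C : comRingType) (n : nat) (S : tensor3 C n) : Prop :=
  sym_tensor S /\
  exists A : 'M[C]_n, A^T *m A = 1%:M /\
    exists alpha : 'I_n -> C,
      forall x : 'cV[C]_n,
        cubic_form S x = \sum_(k < n) alpha k * ((A *m x) k 0) ^+ 3.

(* First slice S_1 = (S_{i j 1})_{i,j}; index 1 is ord0 (dimension n.+1). *)
Definition first_slice (C : Type) (n : nat) (S : tensor3 C n.+1) : 'M[C]_n.+1 :=
  \matrix_(i, j) S i j ord0.

(* Main.v *)
Require Import Defs.
From HB Require Import structures.
From mathcomp Require Import all_boot all_order all_algebra.
Import Order.TTheory GRing.Theory Num.Theory.
Local Open Scope ring_scope.
From mathcomp Require Import all_field.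
From mathcomp Require Import ring zify.
Set Implicit Arguments. Unset Strict Implicit. Unset Printing Implicit Defensive.
Import Order.TTheory GRing.Theory Num.Theory.
Local Open Scope ring_scope.

Definition kry (R : comNzRingType) n (B : 'M[R]_n.+1) : 'M[R]_n.+1 :=
  \matrix_(i, k) (B ^+ k) i ord0.
Definition Pgood (R : comNzRingType) n (B : 'M[R]_n.+1) : R :=
  \det (kry B) * resultant (char_poly B) (char_poly B)^`().

Lemma eigen_pow (R : comNzRingType) n (B : 'M[R]_n.+1) (v : 'rV[R]_n.+1) a k :
  v *m B = a *: v -> v *m B ^+ k = a ^+ k *: v.
Proof.
move=> hv; elim: k => [|k IH]; first by rewrite expr0 mulmx1 scale1r.
by rewrite exprSr mulmxA IH -scalemxAl hv scalerA exprSr.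
Qed.

Lemma good_decomp (C : numClosedFieldType) n (B : 'M[C]_n.+1) :
  B^T = B -> Pgood B != 0 ->
  exists (A : 'M[C]_n.+1) (d : 'I_n.+1 -> C),
    A^T *m A = 1%:M /\ (forall l, A l ord0 != 0) /\
    B = A^T *m (diag_mx (\row_l d l) *m A).
Proof.
move=> BT; rewrite /Pgood mulf_eq0 negb_or => /andP[hK hR].
set p := char_poly B in hR.
have pmon : p \is monic := char_poly_monic B.
have [r Dp] := closed_field_poly_normal p.
rewrite (monicP pmon) scale1r in Dp.
have szr : size r = n.+1.
  by apply/eqP; rewrite -eqSS -(size_prod_XsubC r id) -Dp size_char_poly.
have sep : separable_poly p.
  rewrite unlock coprimep_def.
  move: hR; rewrite resultant_eq0 -leqNgt => h.
  rewrite eqn_leq h /= lt0n size_poly_eq0 gcdp_eq0 negb_and.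
  by rewrite -size_poly_eq0 size_char_poly.
have ur : uniq r by rewrite -separable_prod_XsubC -Dp.
pose lam (l : 'I_n.+1) := r`_l.
have lam_inj : forall l m, lam l = lam m -> l = m.
  move=> l m /eqP; rewrite /lam nth_uniq ?szr // => /eqP h; exact: val_inj.
have ev : forall l, exists2 v : 'rV[C]_n.+1, v *m B = lam l *: v & v != 0.
  move=> l; apply/eigenvalueP; rewrite eigenvalue_root_char -/p Dp.
  by rewrite root_prod_XsubC mem_nth ?szr.
have [v hv vnz] := fin_all_exists2 ev.
pose s l m := \sum_i v l 0 i * v m 0 i.
have sE : forall l m, s l m = (v l *m (v m)^T) 0 0.
  by move=> l m; rewrite !mxE; apply: eq_bigr => i _; rewrite !mxE.
have orth : forall l m, l != m -> s l m = 0.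
  move=> l m lm.
  have h1 : v l *m B *m (v m)^T = lam l *: (v l *m (v m)^T).
    by rewrite hv scalemxAl.
  have h2 : v l *m B *m (v m)^T = lam m *: (v l *m (v m)^T).
    by rewrite -mulmxA -{1}BT -trmx_mul hv linearZ /= scalemxAr.
  have := congr1 (fun X : 'M_1 => X 0 0) (etrans (esym h1) h2); rewrite /= !mxE.
  rewrite -/(s l m) => /eqP; rewrite -subr_eq0 -mulrBl mulf_eq0 subr_eq0.
  case/orP => [/eqP/lam_inj ml|/eqP h0].
    by move: lm; rewrite ml eqxx.
  by rewrite -h0 /s; apply: eq_bigr => i _; rewrite mxE.
have kv : forall l k, (v l *m kry B) 0 k = lam l ^+ k * v l 0 0.
  move=> l k; rewrite mxE.
  transitivity ((v l *m B ^+ k) 0 0); last by rewrite (eigen_pow _ (hv l)) mxE.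
  by rewrite mxE; apply: eq_bigr => i _; rewrite mxE.
have Kunit : kry B \in unitmx by rewrite unitmxE unitfE.
have v00 : forall l, v l 0 0 != 0.
  move=> l; apply: contra (vnz l) => /eqP h0.
  have : v l *m kry B = 0 by apply/rowP => k; rewrite kv h0 mulr0 mxE.
  by move=> h; rewrite -(mulmxK Kunit (v l)) h mul0mx.
pose V : 'M[C]_n.+1 := \matrix_(l, i) v l 0 i.
pose W : 'M[C]_n.+1 := \matrix_(l, k) lam l ^+ k.
have detW : \det W != 0.
  have -> : W = (Vandermonde n.+1 (\row_l lam l))^T.
    by apply/matrixP => l k; rewrite !mxE.
  rewrite det_tr det_Vandermonde; apply/prodf_neq0 => i _.
  apply/prodf_neq0 => j ij; rewrite !mxE subr_eq0; apply/eqP => /lam_inj h.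
  by move: ij; rewrite h ltnn.
have VK : V *m kry B = diag_mx (\row_l v l 0 0) *m W.
  apply/matrixP => l k; rewrite mul_diag_mx !mxE mulrC -kv !mxE.
  by apply: eq_bigr => i _; rewrite mxE.
have detV : \det V != 0.
  have := congr1 determinant VK; rewrite !det_mulmx det_diag => h.
  have : \det V * \det (kry B) != 0.
    by rewrite h mulf_neq0 //; apply/prodf_neq0 => i _; rewrite mxE.
  by rewrite mulf_eq0 negb_or => /andP[].
have VVT : V *m V^T = diag_mx (\row_l s l l).
  apply/matrixP => l m; rewrite !mxE.
  have [<-|lm] := eqVneq l m; rewrite ?mulr1n ?mulr0n.
    by apply: eq_bigr => i _; rewrite !mxE.
  by rewrite -[RHS](orth _ _ lm); apply: eq_bigr => i _; rewrite !mxE.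
have sll : forall l, s l l != 0.
  move=> l; have := congr1 determinant VVT.
  rewrite det_mulmx det_tr det_diag => h.
  have : \prod_i (\row_l s l l) 0 i != 0 by rewrite -h mulf_neq0.
  by move/prodf_neq0 => /(_ l isT); rewrite mxE.
pose c l := sqrtC (s l l).
have cnz : forall l, c l != 0.
  by move=> l; apply: contra (sll l) => /eqP h; rewrite -(sqrtCK (s l l)) -/(c l) h expr0n.
pose A : 'M[C]_n.+1 := \matrix_(l, i) (v l 0 i / c l).
have AAT : A *m A^T = 1%:M.
  apply/matrixP => l m; rewrite !mxE.
  transitivity ((c l)^-1 * (c m)^-1 * s l m).
    rewrite /s mulr_sumr; apply: eq_bigr => i _; rewrite !mxE.
    by rewrite mulrACA mulrC.
  have [<-|lm] := eqVneq l m; last by rewrite orth // mulr0.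
  rewrite -[s l l](sqrtCK (s l l)) -/(c l) expr2 -invrM ?unitfE // mulVf // mulf_neq0 //.
have ATA : A^T *m A = 1%:M by apply: mulmx1C.
have AB : A *m B = diag_mx (\row_l lam l) *m A.
  apply/matrixP => l j; rewrite mul_diag_mx !mxE.
  transitivity ((c l)^-1 * (v l *m B) 0 j); last first.
    by rewrite hv !mxE mulrCA [_^-1 * _]mulrC.
  rewrite mxE mulr_sumr; apply: eq_bigr => i _; rewrite !mxE.
  by rewrite mulrAC mulrC.
exists A, lam; split => //; split.
  by move=> l; rewrite mxE mulf_neq0 // invr_eq0.
by rewrite -AB mulmxA ATA mul1mx.
Qed.

Lemma cube_sum (R : comNzRingType) n (f : 'I_n -> R) :
  (\sum_i f i) ^+ 3 = \sum_i \sum_j \sum_k f i * f j * f k.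
Proof.
rewrite exprS expr2 mulrA mulr_suml mulr_suml; apply: eq_bigr => i _.
rewrite -mulrA mulr_suml mulr_sumr; apply: eq_bigr => j _.
by rewrite mulrA mulr_sumr.
Qed.

Lemma build_OW (C : fieldType) n (A : 'M[C]_n.+1) (d : 'I_n.+1 -> C) :
  A^T *m A = 1%:M -> (forall l, A l ord0 != 0) ->
  exists S : tensor3 C n.+1, in_OW S /\
    forall i j, first_slice S i j = (A^T *m (diag_mx (\row_l d l) *m A)) i j.
Proof.
move=> ATA A0.
pose alpha l := d l / A l ord0.
pose S : tensor3 C n.+1 := fun i j k => \sum_l alpha l * A l i * A l j * A l k.
exists S; split; last first.
  move=> i j; rewrite /first_slice !mxE /S; apply: eq_bigr => l _.
  rewrite mul_diag_mx !mxE /alpha; field; exact: A0.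
split.
  move=> i j k; split; apply: eq_bigr => l _.
    by rewrite -!mulrA [A l i * _]mulrCA.
  by rewrite mulrAC.
exists A; split => //; exists alpha => x; rewrite /cubic_form.
transitivity (\sum_l \sum_i \sum_j \sum_k
   alpha l * ((A l i * x i 0) * (A l j * x j 0) * (A l k * x k 0))).
  symmetry; rewrite exchange_big /=; apply: eq_bigr => i _.
  rewrite exchange_big /=; apply: eq_bigr => j _.
  rewrite exchange_big /=; apply: eq_bigr => k _.
  rewrite /S !mulr_suml; apply: eq_bigr => l _; ring.
apply: eq_bigr => l _; rewrite !mxE cube_sum mulr_sumr; apply: eq_bigr => i _.
rewrite mulr_sumr; apply: eq_bigr => j _.
by rewrite mulr_sumr; apply: eq_bigr => k _.
Qed.

Lemma map_mx_exp (R S : comNzRingType) (f : {rmorphism R -> S}) n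
  (B : 'M[R]_n.+1) k : map_mx f (B ^+ k) = (map_mx f B) ^+ k.
Proof.
elim: k => [|k IH]; first by rewrite !expr0 map_mx1.
by rewrite !exprSr -!mulmxE map_mxM IH.
Qed.

Lemma map_kry (R S : comNzRingType) (f : {rmorphism R -> S}) n
  (B : 'M[R]_n.+1) : map_mx f (kry B) = kry (map_mx f B).
Proof. by apply/matrixP => i k; rewrite !mxE -map_mx_exp mxE. Qed.

Lemma Pgood_map (C : numClosedFieldType) (f : {rmorphism {poly C} -> C}) n
  (B : 'M[{poly C}]_n.+1) : f (Pgood B) = Pgood (map_mx f B).
Proof.
rewrite /Pgood rmorphM /= -det_map_mx map_kry; congr (_ * _).
set p := char_poly B.
have szp : size p = n.+2 by rewrite size_char_poly.
have lp : lead_coef p = 1 by apply/monicP/char_poly_monic.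
have cp : p`_n.+1 = 1 by rewrite -lp lead_coefE szp.
have dn : p^`()`_n = n.+1%:R by rewrite coef_deriv cp.
have nz : (n.+1%:R : {poly C}) != 0 by rewrite -polyC_natr polyC_eq0 pnatr_eq0.
have pnz : p != 0 by rewrite -size_poly_eq0 szp.
have szd : size p^`() = n.+1.
  apply/eqP; rewrite eqn_leq -ltnS -szp lt_size_deriv //=.
  rewrite ltnNge; apply/negP => /leq_sizeP /(_ n (leqnn n)).
  by rewrite dn => /eqP; rewrite (negbTE nz).
have ld : lead_coef p^`() = n.+1%:R by rewrite lead_coefE szd.
rewrite map_resultant ?lp ?ld ?rmorph1 ?oner_neq0 ?rmorph_nat ?pnatr_eq0 //.
by rewrite -deriv_map map_char_poly.
Qed.

Lemma good_of_decomp (C : numClosedFieldType) n (A : 'M[C]_n.+1) (d : 'I_n.+1 -> C) :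
  A^T *m A = 1%:M -> (forall l, A l ord0 != 0) -> injective d ->
  Pgood (A^T *m (diag_mx (\row_l d l) *m A)) != 0.
Proof.
move=> ATA A0 dinj.
have AAT : A *m A^T = 1%:M by apply: mulmx1C.
set N := A^T *m _.
have powk : forall k, N ^+ k = A^T *m (diag_mx (\row_l d l ^+ k) *m A).
  elim=> [|k IH].
    have -> : diag_mx (\row_l d l ^+ 0) = 1%:M.
      by apply/matrixP => i j; rewrite !mxE expr0.
    by rewrite expr0 mul1mx ATA.
  rewrite exprSr IH /N -!mulmxE -!mulmxA [A *m (A^T *m _)]mulmxA AAT mul1mx.
  rewrite [diag_mx _ *m (diag_mx _ *m _)]mulmxA mulmx_diag; congr (_ *m (diag_mx _ *m _)).
  by apply/rowP => l; rewrite !mxE exprSr.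
pose W : 'M[C]_n.+1 := \matrix_(l, k) d l ^+ k.
have KN : kry N = A^T *m (diag_mx (\row_l A l ord0) *m W).
  apply/matrixP => i k; rewrite !mxE powk !mxE; apply: eq_bigr => l _.
  by rewrite !mul_diag_mx !mxE [d l ^+ k * _]mulrC.
have detA : \det A^T != 0.
  apply/eqP => h; have := congr1 determinant ATA.
  by rewrite det_mulmx h mul0r det1 => /eqP; rewrite eq_sym oner_eq0.
have detW : \det W != 0.
  have -> : W = (Vandermonde n.+1 (\row_l d l))^T.
    by apply/matrixP => l k; rewrite !mxE.
  rewrite det_tr det_Vandermonde; apply/prodf_neq0 => i _.
  apply/prodf_neq0 => j ij; rewrite !mxE subr_eq0; apply/eqP => /dinj h.
  by move: ij; rewrite h ltnn.
have hK : \det (kry N) != 0.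
  rewrite KN !det_mulmx det_diag !mulf_neq0 //; apply/prodf_neq0 => l _.
  by rewrite mxE.
pose mA := map_mx (@polyC C) A.
have cpm : char_poly_mx N = mA^T *m (char_poly_mx (diag_mx (\row_l d l)) *m mA).
  rewrite /char_poly_mx mulmxBl mulmxBr mul_scalar_mx -scalemxAr.
  rewrite /mA map_trmx -!map_mxM ATA map_mx1 scalemx1; congr (_ - _).
have cp : char_poly N = \prod_(l < n.+1) ('X - (d l)%:P).
  rewrite /char_poly cpm !det_mulmx mulrCA -det_mulmx /mA map_trmx -map_mxM.
  rewrite ATA map_mx1 det1 mulr1 -/(char_poly _) char_poly_trig ?diag_mx_is_trig //.
  by apply: eq_bigr => l _; rewrite !mxE eqxx mulr1n.
have sep : separable_poly (char_poly N).
  have -> : char_poly N = \prod_(z <- [seq d l | l <- enum 'I_n.+1]) ('X - z%:P).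
    by rewrite cp big_map big_enum.
  by rewrite separable_prod_XsubC map_inj_uniq // enum_uniq.
rewrite /Pgood mulf_neq0 // resultant_eq0 -leqNgt.
by move: sep; rewrite unlock coprimep_def => /eqP ->.
Qed.

Lemma householder (C : numClosedFieldType) n :
  exists H : 'M[C]_n.+1, H^T = H /\ H^T *m H = 1%:M /\ forall l, H l ord0 != 0.
Proof.
pose a : C := (n.+1)%:R.
pose u : 'cV[C]_n.+1 := \col_i (if i == ord0 then a else 1).
pose s : C := ((n.+1) ^ 2 + n)%:R.
have s0 : s != 0 by rewrite pnatr_eq0; lia.
have uTu : u^T *m u = s%:M.
  apply/matrixP => i j; rewrite !ord1 !mxE big_ord_recl /= !mxE eqxx mulr1n.
  under eq_bigr => l _ do rewrite !mxE /= mulr1.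
  by rewrite sumr_const card_ord /s natrD natrX expr2.
pose H : 'M[C]_n.+1 := 1%:M - (2 / s) *: (u *m u^T).
have HT : H^T = H.
  by rewrite /H linearB /= tr_scalar_mx linearZ /= trmx_mul trmxK.
exists H; split => //; split.
  have PP : u *m u^T *m (u *m u^T) = s *: (u *m u^T).
    by rewrite mulmxA -[u *m u^T *m u]mulmxA uTu mul_mx_scalar -scalemxAl.
  rewrite HT /H mulmxBl !mulmxBr mul1mx mulmx1 -scalemxAl -!scalemxAr mul1mx PP scalerA.
  rewrite scalerA; have -> : 2 / s * (2 / s) * s = 2 / s + 2 / s.
    by rewrite -mulrA divfK // mulr2n mulrDr mulr1 mulrC.
  set Q := (2 / s) *: _; rewrite scalerDl -/Q (_ : Q - (Q + Q) = - Q).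
    by rewrite opprK subrK.
  by rewrite opprD addrA subrr sub0r.
move=> l; rewrite /H !mxE big_ord1 !mxE eqxx.
have a0 : a != 0 by rewrite pnatr_eq0.
have c0 : 2 / s != 0 by rewrite mulf_neq0 ?invr_eq0 // pnatr_eq0.
have [l0|l0] := eqVneq l ord0; last first.
  by rewrite mulr0n sub0r oppr_eq0 mul1r mulf_neq0.
apply/eqP; move/eqP; rewrite subr_eq0 => /eqP h.
have h' := congr1 (fun x => x * s) h; move: h' => /=.
rewrite mul1r mulrAC divfK // /s /a -!natrM => /eqP; rewrite eqr_nat; lia.
Qed.

Unset Implicit Arguments.

Theorem proposition14 (C : numClosedFieldType) (n : nat) (M : 'M[C]_n.+1) :
  M^T = M ->
  forall eps : C, 0 < eps ->
  exists S : tensor3 C n.+1,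
    in_OW S /\ forall i j : 'I_n.+1, `|first_slice S i j - M i j| < eps.
Proof.
move=> MT eps eps0.
have [H [HT [HH H0]]] := householder C n.
pose D : 'I_n.+1 -> C := fun l => (l : nat)%:R.
have Dinj : injective D by move=> x y /eqP; rewrite eqr_nat => /eqP/val_inj.
pose N := H^T *m (diag_mx (\row_l D l) *m H).
have PN : Pgood N != 0 by apply: good_of_decomp.
have NT : N^T = N.
  by rewrite /N !trmx_mul trmxK tr_diag_mx HT mulmxA.
pose X := N - M.
have XT : X^T = X by rewrite /X linearB /= NT MT.
pose Sg := \sum_i \sum_j `|X i j|.
have Sg0 : 0 <= Sg by apply: sumr_ge0 => i _; apply: sumr_ge0.
have Sg1 : 0 < 1 + Sg by rewrite ltr_wpDr.
pose del := eps / (1 + Sg).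
have del0 : 0 < del by rewrite divr_gt0.
pose Bp : 'M[{poly C}]_n.+1 := map_mx polyC M + 'X *: map_mx polyC X.
pose Q := Pgood Bp.
have evQ : forall t, Q.[t] = Pgood (M + t *: X).
  move=> t; rewrite -horner_evalE /Q Pgood_map; congr Pgood.
  by apply/matrixP => i j; rewrite !mxE rmorphD rmorphM /= !horner_evalE hornerX !hornerC.
have Q0 : Q != 0.
  by apply: contra PN => /eqP Q0; rewrite -[N](subrK M) addrC -[N - M]scale1r -evQ Q0 horner0.
pose ts := [seq del / (k.+1)%:R | k <- iota 0 (size Q)].
have uts : uniq ts.
  rewrite map_inj_uniq ?iota_uniq // => a b.
  move/(mulfI (lt0r_neq0 del0))/invr_inj/eqP; rewrite eqr_nat eqSS => /eqP //.
have : ~~ all (root Q) ts.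
  apply/negP => hall; have := max_poly_roots Q0 hall uts.
  by rewrite size_map size_iota ltnn.
case/allPn => t /mapP [k _ ->] nr.
set c := del / k.+1%:R in nr.
pose B := M + c *: X.
have BT : B^T = B by rewrite /B linearD linearZ /= MT XT.
have PB : Pgood B != 0 by rewrite -evQ.
have [A [d [ATA [A0 DB]]]] := good_decomp BT PB.
have [S [OS FS]] := build_OW d ATA A0.
exists S; split => // i j.
have BM : B i j - M i j = c * X i j by rewrite /B !mxE addrAC subrr add0r.
rewrite FS -DB BM normrM.
have k0 : 0 < (k.+1)%:R :> C by rewrite ltr0n.
have c0 : 0 <= c by rewrite divr_ge0 // ltW.
have hcd : `|c| <= del.
  by rewrite ger0_norm // ler_pdivrMr // ler_peMr ?ler1n // ltW.
have XS : `|X i j| <= Sg.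
  rewrite /Sg (bigD1 i) //= (bigD1 j) //= -addrA lerDl addr_ge0 //.
    by apply: sumr_ge0.
  by apply: sumr_ge0 => i' _; apply: sumr_ge0.
have h1 : `|c| * `|X i j| <= del * Sg.
  by apply: ler_pM.
apply: le_lt_trans h1 _.
rewrite -[X in _ < X](divfK (lt0r_neq0 Sg1)) -/del [in X in _ < X]mulrC mulrC ltr_pM2l //.
by rewrite ltrDr.
Qed.
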